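(* Consider an $a\times b$ grid of unit cells with $\ell = a+b$ a power of two, and any monotone path $\gamma$ through the grid. Then the region under $\gamma$ can be decomposed into disjoint axis-parallel rectangles (each a union of grid cells) such that the sum of the perimeters of these rectangles is $O(\ell\log \ell)$.
   Context: A monotone path is a path along grid lines from the bottom-left corner to the top-right corner of the grid that only moves up or right. The region under $\gamma$ is the set of grid cells lying below (equivalently, to the lower right of) $\gamma$. *)

(* Defs.v *)
From mathcomp Require Import all_boot.
Set Implicit Arguments. Unset Strict Implicit. Unset Printing Implicit Defensive.

(* Grid: cells (i, j) with 0 <= i < a (column, x-coordinate) and
   0 <= j < b (row, y-coordinate).  Cell (i,j) is [i,i+1] x [j,j+1].
   A monotone path from (0,0) to (a,b) is a word of steps:
   true = one unit step right, false = one unit step up. *)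
Definition monotone_path (a b : nat) (p : seq bool) : Prop :=
  count id p = a /\ count negb p = b.

Fixpoint heights_from (p : seq bool) (y : nat) : seq nat :=
  match p with
  | [::] => [::]
  | true :: p' => y :: heights_from p' y
  | false :: p' => heights_from p' y.+1
  end.

(* height of the path above column i (the horizontal edge of the path
   spanning x in [i, i+1]) *)
Definition path_height (p : seq bool) (i : nat) : nat :=
  nth 0 (heights_from p 0) i.

Definition under_path (a b : nat) (p : seq bool) (c : nat * nat) : bool :=
  [&& c.1 < a, c.2 < b & c.2 < path_height p c.1].

(* axis-parallel grid rectangle [x0,x1) x [y0,y1) of cells,
   encoded as ((x0, x1), (y0, y1)) *)
Definition rect := ((nat * nat) * (nat * nat))%type.

Definition rect_nonempty (r : rect) : bool :=
  (r.1.1 < r.1.2) && (r.2.1 < r.2.2).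

Definition in_rect (r : rect) (c : nat * nat) : bool :=
  [&& r.1.1 <= c.1, c.1 < r.1.2, r.2.1 <= c.2 & c.2 < r.2.2].

Definition perimeter (r : rect) : nat :=
  2 * ((r.1.2 - r.1.1) + (r.2.2 - r.2.1)).

Definition rects_disjoint (r s : rect) : Prop :=
  forall c, ~~ (in_rect r c && in_rect s c).

Definition dflt_rect : rect := ((0, 0), (0, 0)).

Definition rect_decomposition (a b : nat) (p : seq bool) (rs : seq rect) : Prop :=
  [/\ all rect_nonempty rs,
      (forall i j, i < j < size rs ->
         rects_disjoint (nth dflt_rect rs i) (nth dflt_rect rs j)) &
      forall c, under_path a b p c = has (fun r => in_rect r c) rs].

(* Main.v *)
Require Import Defs.
From mathcomp Require Import all_boot zify.


Lemma size_hf p y : size (heights_from p y) = count id p.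
Proof. by elim: p y => [|[] p IH] y //=; rewrite IH. Qed.

Lemma path_hf p y x : x <= y -> path leq x (heights_from p y).
Proof.
elim: p x y => [|[] p IH] x y //= H.
  by rewrite H IH.
by apply: IH; lia.
Qed.

Lemma all_hf p y : all (fun z => z <= y + count negb p) (heights_from p y).
Proof.
elim: p y => [|[] p IH] y //=.
  by rewrite leq_addr /= add0n; apply: IH.
rewrite add1n addnS -addSn; apply: IH.
Qed.

Section H.
Variables (a b : nat) (p : seq bool).
Hypothesis Hp : monotone_path a b p.

Definition hh i := if i < a then path_height p i else b.

Lemma ph_le i : i < a -> path_height p i <= b.
Proof.
case: Hp => Ha Hb Hi; rewrite /path_height.
have := all_hf p 0; move/allP => /(_ (nth 0 (heights_from p 0) i)).
rewrite add0n Hb; apply; apply: mem_nth; by rewrite size_hf Ha.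
Qed.

Lemma hh_mono i j : i <= j -> hh i <= hh j.
Proof.
move=> Hij; rewrite /hh.
case: (ltnP j a) => Hj.
  have Hi : i < a by lia.
  rewrite Hi /path_height.
  have := sorted_leq_nth leq_trans leqnn 0 (path_sorted (@path_hf p 0 0 (leqnn 0))).
  move=> H; apply: H => //; rewrite inE size_hf; case: Hp => -> _ //.
case: (ltnP i a) => Hi //; exact: ph_le.
Qed.
End H.

Fixpoint Tdec (a : nat) (h : nat -> nat) (d x0 y0 : nat) : seq rect :=
 match d with
 | 0 => [:: ((x0, minn x0.+1 a), (y0, h x0))]
 | d'.+1 => ((x0 + 2^d', minn (x0 + 2^d'.+1) a), (y0, h (x0 + 2^d')))
             :: Tdec a h d' x0 y0 ++ Tdec a h d' (x0 + 2^d') (h (x0 + 2^d'))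
 end.

Lemma T_count a h (Hm : forall i j, i <= j -> h i <= h j) d x0 y0 u v :
  y0 <= h x0 ->
  count (fun r => in_rect r (u, v)) (Tdec a h d x0 y0) =
  [&& x0 <= u, u < x0 + 2^d, u < a, y0 <= v & v < h u].
Proof.
elim: d x0 y0 => [|d IH] x0 y0 Hy /=.
  rewrite /in_rect /= ltn_min addn0 expn0 addn1.
  case: (ltnP u x0.+1) => Hu; last by case: (x0 <= u).
  case: (leqP x0 u) => H0 //=; have -> : u = x0 by lia.
  by [].
rewrite count_cat IH // IH; last exact: leqnn.
rewrite /in_rect /= ltn_min expnS mul2n -addnn.
set m := x0 + 2 ^ d.
have -> : x0 + (2^d + 2^d) = m + 2^d by rewrite /m addnA.
case: (ltnP u m) => Hum.
  have -> : u < m + 2 ^ d by lia.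
  by rewrite /= add0n addn0.
have hmu := Hm _ _ Hum.
have hym : y0 <= h m by apply: leq_trans Hy (Hm _ _ _); rewrite /m leq_addr.
have -> : x0 <= u by lia.
rewrite /=.
case: (u < m + 2^d); case: (u<a); rewrite /= ?andbF //=.
case: (leqP y0 v) => H1; case: (leqP (h m) v) => H2; case: (ltnP v (h u)) => H3 //=; lia.
Qed.


Lemma T_cost a h (Hm : forall i j, i <= j -> h i <= h j) d x0 y0 :
  y0 <= h x0 ->
  \sum_(r <- Tdec a h d x0 y0) perimeter r <= 2 * d.+1 * (2^d + h (x0 + 2^d) - y0).
Proof.
elim: d x0 y0 => [|d IH] x0 y0 Hy /=.
  rewrite big_cons big_nil /perimeter /= expn0 addn1.
  have := Hm x0 x0.+1 (leqnSn _); have := geq_minl x0.+1 a; move: (minn _ _) => M; clear Hm; lia.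
rewrite big_cons big_cat /=.
have E : x0 + 2^d.+1 = (x0 + 2^d) + 2^d by rewrite expnS mul2n -addnn addnA.
rewrite E.
set m := x0 + 2 ^ d.
have hym : y0 <= h m by apply: leq_trans Hy (Hm _ _ _); rewrite /m leq_addr.
have hmt : h m <= h (m + 2^d) by apply: Hm; rewrite leq_addr.
have I1 := IH x0 y0 Hy; have I2 := IH m (h m) (leqnn _).
rewrite -/m in I1.
move: I1 I2; rewrite /perimeter /=.
rewrite expnS.
have := geq_minl (m + 2^d) a.
move: (\sum_(r <- Tdec a h d x0 y0) _) (\sum_(r <- Tdec a h d m (h m)) _) => S1 S2.
move: (minn _ _) hym hmt => M.
move: (h m) (h (m + 2^d)) => H1 H2.
move: (2^d) => P.
clear.
move=> hym hmt HM I1 I2.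
nia. Qed.


Lemma two_count (Q : pred rect) (s : seq rect) i j :
  i < j < size s -> Q (nth dflt_rect s i) -> Q (nth dflt_rect s j) -> 1 < count Q s.
Proof.
elim: s i j => [|x s IH] [|i] [|j] //= H.
- by move: H; rewrite ltn0 andbF.
- move=> Px Pj; have : 0 < count Q s.
    rewrite -has_count; apply/hasP.
    exists (nth dflt_rect s j) => //; apply: mem_nth; exact: H.
  case: (Q x) Px => //= _; lia.
- move=> Pi Pj; have := IH i j; move: H => /andP [Hij Hj].
  rewrite ltnS in Hij; rewrite ltnS in Hj; rewrite Hij Hj => /(_ isT Pi Pj); lia.
Qed.

Lemma sum_filter (P : pred rect) (F : rect -> nat) s :
  \sum_(r <- filter P s) F r <= \sum_(r <- s) F r.
Proof.
elim: s => [|x s IH] //=; case: (P x); rewrite !big_cons; lia.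
Qed.

Theorem mainTheorem4 :
  exists C : nat,
    forall (k a b : nat) (p : seq bool),
      a + b = 2 ^ k ->
      monotone_path a b p ->
      exists rs : seq rect,
        rect_decomposition a b p rs /\
        \sum_(r <- rs) perimeter r <= C * (2 ^ k * k).
Proof.
exists 8 => k a b p Hab Hp.
case: k Hab => [|k] Hab.
  exists [::]; split; last by rewrite big_nil.
  split => //; first by move=> i j /andP[_ ].
  move=> [u v]; rewrite /under_path /=.
  case: (ltnP u a) => Hu //=; case: (ltnP v b) => Hv //=; lia.
have Hm := @hh_mono a b p Hp.
set h := hh a b p.
exists (filter rect_nonempty (Tdec a h k.+1 0 0)).
have Hcnt : forall c, count (in_rect^~ c) (filter rect_nonempty (Tdec a h k.+1 0 0))
   = under_path a b p c.
  move=> [u v].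
  rewrite count_filter.
  have -> : count (predI (in_rect^~ (u, v)) rect_nonempty) (Tdec a h k.+1 0 0)
          = count (in_rect^~ (u, v)) (Tdec a h k.+1 0 0).
    apply: eq_count => r /=.
    case E: (in_rect r (u,v)) => //=; move: E.
    rewrite /in_rect /rect_nonempty => /and4P [E1 E2 E3 E4].
    apply/andP; split; lia.
  rewrite T_count // /under_path /= add0n /h /hh.
  case: (ltnP u a) => Hu /=; last by rewrite andbF.
  have -> : u < 2 ^ k.+1 by lia.
  case: (ltnP v (path_height p u)) => Hv /=; last by rewrite andbF.
  by have -> : v < b by have := @ph_le a b p Hp u Hu; lia.
split.
  split.
  - by apply/allP => r; rewrite mem_filter => /andP[].
  - move=> i j Hij [u v]; apply/negP => /andP[H1 H2].
    have := @two_count (in_rect^~ (u, v)) _ _ _ Hij H1 H2.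
    rewrite Hcnt; by case: (under_path _ _ _ _).
  - by move=> c; rewrite has_count Hcnt; case: (under_path _ _ _ _).
have Hs := sum_filter rect_nonempty perimeter (Tdec a h k.+1 0 0).
apply: (leq_trans Hs).
have Hc := @T_cost a h Hm k.+1 0 0 (leq0n _).
apply: (leq_trans Hc).
rewrite add0n subn0 /h /hh.
have -> : 2 ^ k.+1 < a = false by apply/negbTE; rewrite -leqNgt; lia.
have : b <= 2 ^ k.+1 by lia.
move: (2 ^ k.+1) => P HP; nia.
Qed.
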